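(* Let $P(x)=\frac1\pi\frac1{1+x^2}$, $P_k(x)=kP(kx)$ for $k=1,2,\dots$, and $\langle T_k,\varphi\rangle=\int_{\mathbb{R}}\varphi(x)P_k(x)\,dx$. Let $\Pi_k$ be the Borel measure on $\mathbb{R}^2$ with $\Pi_k(A)=\iint_A\mathcal{X}_{[-1/k,1/k]}(x-y)\,dx\,dy$ and $\langle\!\langle S_k,\Theta\rangle\!\rangle=\iint\Theta\,d\Pi_k$. For $\Phi\in\mathscr{C}_c(\mathbb{R}^2)$ let $Kir_k\Phi$ be the continuous function with $\int\varphi\,Kir_k\Phi\,P_k\,dx=\iint\varphi(x)\Phi(x,y)\,d\Pi_k(x,y)$ for all $\varphi\in\mathscr{C}_c(\mathbb{R})$. Then for every $x\in\mathbb{R}$, $$\lim_{k\to\infty}Kir_k\Phi(x)=2\pi x^2\Phi(x,x).$$ *)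

(* Defs.v *)
From HB Require Import structures.
From mathcomp Require Import all_boot all_order all_algebra.
From mathcomp Require Import all_classical all_reals all_analysis.
Set Implicit Arguments. Unset Strict Implicit. Unset Printing Implicit Defensive.
Import Order.TTheory GRing.Theory Num.Theory.
Import numFieldNormedType.Exports.
Local Open Scope classical_set_scope.
Local Open Scope ring_scope.

Definition Pker {R : realType} (x : R) : R := pi^-1 * (1 + x ^+ 2)^-1.

Definition Pk {R : realType} (k : nat) (x : R) : R := k%:R * Pker (k%:R * x).

Definition band {R : realType} (k : nat) (z : R * R) : R :=
  \1_(`[- k%:R^-1, k%:R^-1]%classic) (z.1 - z.2).

(* the Borel measure Pi_k(A) = \iint_A X_[-1/k,1/k](x-y) dx dy ;
   integrals against Pi_k are written with this density *)
Definition Pi_k {R : realType} (k : nat) (A : set (R * R)) : \bar R :=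
  (\int[(@lebesgue_measure R) \x (@lebesgue_measure R)]_(z in A) (band k z)%:E)%E.

Definition int_Pi {R : realType} (k : nat) (Theta : R * R -> R) : \bar R :=
  (\int[(@lebesgue_measure R) \x (@lebesgue_measure R)]_z (Theta z * band k z)%:E)%E.

Definition has_compact_support {T : topologicalType} {R : realType}
  (f : T -> R) : Prop := compact (closure [set x | f x != 0]).

(* Main.v *)
Require Import Defs.
From HB Require Import structures.
From mathcomp Require Import all_boot all_order all_algebra.
From mathcomp Require Import all_classical all_reals all_analysis.
Import Order.TTheory GRing.Theory Num.Theory.
Import numFieldNormedType.Exports.
Local Open Scope classical_set_scope.


From mathcomp Require Import ring lra measurable_realfun.
Local Open Scope ring_scope.
Lemma le_integral_any d (T : measurableType d) (R : realType)
  (mu : {measure set T -> \bar R}) (f g : T -> \bar R) :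
  (forall x, (f x <= g x)%E) -> (\int[mu]_x f x <= \int[mu]_x g x)%E.
Proof.
move=> fg; rewrite /integral !patch_setT; apply: leeB.
- apply: ereal_sup_le => _ [h /= hf <-]; exists h => //= x.
  apply: (le_trans (hf x)); apply: (@funepos_le _ _ setT); rewrite ?inE // => y _; exact: fg.
- apply: ereal_sup_le => _ [h /= hf <-]; exists h => //= x.
  apply: (le_trans (hf x)); apply: (@funeneg_le _ _ setT); rewrite ?inE // => y _; exact: fg.
Qed.
Definition tent {R : realType} (x r t : R) : R := Num.max 0 (r - `|t - x|).

Lemma tent_ge0 {R : realType} (x r t : R) : 0 <= tent x r t.
Proof. by rewrite /tent le_max lexx. Qed.

Lemma tent_supp {R : realType} (x r t : R) : tent x r t != 0 -> `|t - x| < r.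
Proof.
move=> H; rewrite ltNge; apply/negP => hr; move: H.
have h : r - `|t - x| <= 0 by rewrite subr_le0.
by rewrite /tent (max_l h) eqxx.
Qed.

Lemma tent_cont {R : realType} (x r : R) : continuous (tent x r).
Proof.
move=> t; apply: (@continuous_max R R (cst 0) (fun t => r - `|t - x|)).
  exact: cst_continuous.
apply: continuousB; first exact: cst_continuous.
apply: (@continuous_comp _ _ _ (fun t => t - x) Num.norm).
  apply: continuousB; [exact: cvg_id | exact: cst_continuous].
exact: norm_continuous.
Qed.

Lemma tent_cs {R : realType} (x r : R) : has_compact_support (tent x r).
Proof.
rewrite /has_compact_support.
have cl : closed (`[x - r, x + r]%classic : set R).
  exact: itv_closed.

apply: (subclosed_compact _ (@segment_compact R (x - r) (x + r))).

  exact: closed_closure.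
have sub : [set t | tent x r t != 0] `<=` `[x - r, x + r].
  move=> t /= /tent_supp.
  rewrite in_itv /= => /ltW; rewrite ler_norml.
  move=> /andP[h1 h2]; apply/andP; split; first by move: h1; rewrite lerBrDl lerBlDl addrC.

  by rewrite -lerBlDl.
by rewrite [X in _ `<=` X](closure_id _).1 //; exact: closureS.
Qed.

Lemma int_cst_indic {R : realType} (c a b : R) : 0 <= c -> a <= b ->
  (\int[@lebesgue_measure R]_t (c * \1_(`[a, b]%classic) t)%:E = (c * (b - a))%:E)%E.
Proof.
move=> c0 ab.
under eq_integral do rewrite EFinM.
rewrite ge0_integralZl_EFin //.
rewrite integral_indic //=.

  rewrite setIT lebesgue_measure_itv /= lte_fin.
  case: ltP => h; first by rewrite -EFinD -EFinM.
  have -> : b = a by apply/eqP; rewrite eq_le h ab.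
  by rewrite subrr mulr0 mule0.
by apply/measurable_EFinP; apply: measurable_indic.
Qed.


Lemma indic_itvE {R : realType} (a b t : R) :
  \1_(`[a, b]%classic) t = (if (a <= t) && (t <= b) then 1 else 0 : R).
Proof.
rewrite indicE set_itvE; case: ifPn => h.
  by rewrite mem_set.
by rewrite memNset //=; apply/negP.
Qed.

Lemma tent_le {R : realType} (x r t : R) : 0 < r ->
  tent x r t <= r * \1_(`[x - r, x + r]%classic) t.
Proof.
move=> r0; rewrite indic_itvE.
have [->|/tent_supp h] := eqVneq (tent x r t) 0.
  by case: ifP => _; rewrite ?mulr1 ?mulr0 // ltW.
have -> : (x - r <= t) && (t <= x + r).
  by move: h; rewrite ltr_norml => /andP[h1 h2]; apply/andP; split; lra.
rewrite mulr1 /tent ge_max ltW //=; move: (normr_ge0 (t - x)); lra.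
Qed.

Lemma tent_ge {R : realType} (x r t : R) : 0 < r ->
  r / 2 * \1_(`[x - r / 2, x + r / 2]%classic) t <= tent x r t.
Proof.
move=> r0; rewrite indic_itvE; case: ifP => h; last by rewrite mulr0 tent_ge0.
rewrite mulr1 /tent le_max; apply/orP; right.
move/andP: h => [h1 h2].
have : `|t - x| <= r / 2 by rewrite ler_norml; apply/andP; split; lra.
lra.
Qed.

Lemma tent_int_bounds {R : realType} (x r : R) : 0 < r ->
  ((r / 2 * r)%:E <= \int[@lebesgue_measure R]_t (tent x r t)%:E /\
   \int[@lebesgue_measure R]_t (tent x r t)%:E <= (r * (2 * r))%:E)%E.
Proof.
move=> r0; split.
  have -> : r / 2 * r = r / 2 * ((x + r / 2) - (x - r / 2)) by congr (_ * _); lra.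
  rewrite -int_cst_indic; [|lra|lra].
  by apply: le_integral_any => t; rewrite lee_fin tent_ge.
have -> : r * (2 * r) = r * ((x + r) - (x - r)) by congr (_ * _); lra.
rewrite -int_cst_indic; [|lra|lra].
by apply: le_integral_any => t; rewrite lee_fin tent_le.
Qed.

Lemma tent_integrable {R : realType} (x r : R) : 0 < r ->
  (@lebesgue_measure R).-integrable setT (fun t => (tent x r t)%:E).
Proof.
move=> r0; apply/integrableP; split.
  by apply/measurable_EFinP; apply: continuous_measurable_fun; exact: tent_cont.
under eq_integral do rewrite gee0_abs ?lee_fin ?tent_ge0 //.
have [_ h] := @tent_int_bounds R x r r0.
by apply: (le_lt_trans h); rewrite ltry.
Qed.

Lemma band_E {R : realType} (k : nat) (t y : R) :
  band k (t, y) = \1_(`[t - k%:R^-1, t + k%:R^-1]%classic) y.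
Proof.
rewrite /band !indic_itvE /=.
have -> : (- k%:R^-1 <= t - y) && (t - y <= k%:R^-1) =
          (t - k%:R^-1 <= y) && (y <= t + k%:R^-1).
  by apply/andP/andP => -[h1 h2]; split; lra.
by [].
Qed.

Definition hk {R : realType} (k : nat) (psi : R -> R) (z : R * R) : R :=
  psi z.1 * band k z.

Lemma hk_meas {R : realType} (k : nat) (psi : R -> R) : continuous psi ->
  measurable_fun setT (@hk R k psi : measurableTypeR R * measurableTypeR R -> R).
Proof.
move=> cpsi; apply: measurable_funM.
  apply: measurableT_comp; last exact: measurable_fst.
  exact: continuous_measurable_fun.
rewrite /band; apply: measurableT_comp; first exact: measurable_indic.
by apply: measurable_funB; [exact: measurable_fst | exact: measurable_snd].
Qed.

Lemma hk_int {R : realType} (k : nat) (psi : R -> R) : (0 < k)%N ->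
  continuous psi -> (forall t, 0 <= psi t) ->
  (\int[(@lebesgue_measure R) \x (@lebesgue_measure R)]_z (hk k psi z)%:E =
   \int[@lebesgue_measure R]_t (psi t)%:E * (2 / k%:R)%:E)%E.
Proof.
move=> k0 cpsi psi0.
have kp : 0 < k%:R :> R by rewrite ltr0n.
rewrite (@fubini_tonelli1 _ _ _ _ R (@lebesgue_measure R) (@lebesgue_measure R) (fun z => (hk k psi z)%:E)); last 2 first.
- by apply/measurable_EFinP; exact: hk_meas.
- by move=> z; rewrite lee_fin /hk mulr_ge0 // /band indic_ge0.
rewrite /fubini_F /=.
transitivity (\int[@lebesgue_measure R]_t (psi t * (2 / k%:R))%:E)%E.
  apply: eq_integral => t _.
  rewrite /hk /=.
  transitivity (\int[@lebesgue_measure R]_y (psi t * \1_(`[t - k%:R^-1, t + k%:R^-1]%classic) y)%:E)%E.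
    by apply: eq_integral => y _; congr (_%:E); congr (_ * _); exact: band_E.
  rewrite int_cst_indic //.
    by congr (_ %:E); congr (_ * _); lra.
  have : 0 < k%:R^-1 :> R by rewrite invr_gt0.
  lra.
under eq_integral do rewrite EFinM.
rewrite ge0_integralZr //.
- by apply/measurable_EFinP; exact: continuous_measurable_fun.
- by move=> t _; rewrite lee_fin.
Qed.

Lemma tent_fin {R : realType} (x r : R) : 0 < r ->
  (\int[@lebesgue_measure R]_t (tent x r t)%:E)%E \is a fin_num.
Proof.
move=> r0; have [_ h] := @tent_int_bounds R x r r0.
rewrite fin_numElt (@lt_le_trans _ _ 0%E) ?ltNyr //=.
  by rewrite (le_lt_trans h) // ltry.
by apply: integral_ge0 => t _; rewrite lee_fin tent_ge0.
Qed.

Lemma hk_integrable {R : realType} (k : nat) (x r : R) : (0 < k)%N -> 0 < r ->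
  ((@lebesgue_measure R) \x (@lebesgue_measure R))%E.-integrable setT
     (fun z => (hk k (tent x r) z)%:E).
Proof.
move=> k0 r0; apply/integrableP; split.
  by apply/measurable_EFinP; apply: hk_meas; exact: tent_cont.
have h0 : forall z, 0 <= hk k (tent x r) z.
  by move=> z; rewrite /hk mulr_ge0 ?tent_ge0 // /band indic_ge0.
under eq_integral do rewrite gee0_abs ?lee_fin ?h0 //.
rewrite hk_int //; [|exact: tent_cont|exact: tent_ge0].
have [_ h] := @tent_int_bounds R x r r0.
have fin := @tent_fin R x r r0.
by rewrite -(fineK fin) -EFinM ltry.
Qed.

Lemma key {R : realType} (Phi : R * R -> R) (Kir : nat -> R -> R) (k : nat)
  (x M eps d r eta : R) :
  (0 < k)%N -> 0 < r -> r + k%:R^-1 <= d ->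
  (forall t y, `|t - x| < d -> `|y - x| < d -> `|Phi (t, y) - M| <= eps) ->
  (forall t, `|t - x| < r -> `|Kir k t * Pk k t - Kir k x * Pk k x| <= eta) ->
  (\int[@lebesgue_measure R]_t (tent x r t * Kir k t * Pk k t)%:E)%E =
     int_Pi k (fun z => tent x r z.1 * Phi z) ->
  Kir k x * Pk k x - eta <= (M + eps) * (2 / k%:R) /\
  (M - eps) * (2 / k%:R) <= Kir k x * Pk k x + eta.
Proof.
move=> k0 r0 rkd HPhi HK Heq.
set g := Kir k x * Pk k x.
have kp : 0 < k%:R :> R by rewrite ltr0n.
have fin := @tent_fin R x r r0.
set I := (\int[@lebesgue_measure R]_t (tent x r t)%:E)%E in fin.
have [Ilo _] := @tent_int_bounds R x r r0.
have Ipos : 0 < fine I.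
  rewrite -lte_fin fineK //; apply: lt_le_trans Ilo; rewrite lte_fin.
  by apply: mulr_gt0 => //; apply: divr_gt0.
have LHSint : forall c, (\int[@lebesgue_measure R]_t (c * tent x r t)%:E = c%:E * I)%E.
  move=> c; under eq_integral do rewrite EFinM.
  by rewrite integralZl //; exact: tent_integrable.
have RHSint : forall c, (\int[(@lebesgue_measure R) \x (@lebesgue_measure R)]_z
     (c * hk k (tent x r) z)%:E = c%:E * (I * (2 / k%:R)%:E))%E.
  move=> c; under eq_integral do rewrite EFinM.
  rewrite integralZl //; last exact: hk_integrable.
  by rewrite hk_int //; [exact: tent_cont | exact: tent_ge0].
have Lb : forall t, (g - eta) * tent x r t <= tent x r t * Kir k t * Pk k t /\
                    tent x r t * Kir k t * Pk k t <= (g + eta) * tent x r t.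
  move=> t; have [->|/tent_supp h] := eqVneq (tent x r t) 0.
    by rewrite !mulr0 !mul0r.
  have := HK t h; rewrite -/g ler_norml => /andP[h1 h2].
  have t0 := tent_ge0 x r t.
  rewrite -mulrA [tent x r t * _]mulrC.
  by split; apply: ler_wpM2r => //; lra.
have Rb : forall z : R * R,
    (M - eps) * hk k (tent x r) z <= tent x r z.1 * Phi z * band k z /\
    tent x r z.1 * Phi z * band k z <= (M + eps) * hk k (tent x r) z.
  case=> t y; rewrite /hk /band /= indic_itvE.
  case: ifP => hb; last by split; lra.
  have [->|/tent_supp h] := eqVneq (tent x r t) 0.
    by split; lra.
  have hy : `|y - x| < d.
    move/andP: hb => [hb1 hb2].
    move: h; rewrite !ltr_norml => /andP[h1 h2].
    have : 0 < k%:R^-1 :> R by rewrite invr_gt0.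
    by move=> ?; apply/andP; split; lra.
  have hd : `|t - x| < d.
    have : 0 < k%:R^-1 :> R by rewrite invr_gt0.
    move=> ?; lra.
  have := HPhi t y hd hy; rewrite ler_norml => /andP[h1 h2].
  have t0 := tent_ge0 x r t.
  rewrite !mulr1 [tent x r t * _]mulrC.
  by split; apply: ler_wpM2r => //; lra.
have E1 : ((g - eta)%:E * I <= (M + eps)%:E * (I * (2 / k%:R)%:E))%E.
  rewrite -LHSint -RHSint.
  apply: (@le_trans _ _ (\int[@lebesgue_measure R]_t (tent x r t * Kir k t * Pk k t)%:E)%E).
    by apply: le_integral_any => t; rewrite lee_fin; exact: (Lb t).1.
  rewrite Heq /int_Pi; apply: le_integral_any => z.
  by rewrite lee_fin; exact: (Rb z).2.
have E2 : ((M - eps)%:E * (I * (2 / k%:R)%:E) <= (g + eta)%:E * I)%E.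
  rewrite -LHSint -RHSint.
  apply: (@le_trans _ _ (int_Pi k (fun z => tent x r z.1 * Phi z))).
    by apply: le_integral_any => z; rewrite lee_fin; exact: (Rb z).1.
  rewrite -Heq; apply: le_integral_any => t.
  by rewrite lee_fin; exact: (Lb t).2.
move: E1 E2; rewrite -(fineK fin) -!EFinM !lee_fin => E1 E2.
split.
  by rewrite -(ler_pM2r Ipos); move: E1; rewrite [X in _ <= X -> _]mulrCA mulrC [X in _ <= X -> _]mulrC.
by rewrite -(ler_pM2r Ipos); move: E2; rewrite [X in X <= _ -> _]mulrCA [X in X <= _ -> _]mulrC.
Qed.

Lemma Pk_cont {R : realType} (k : nat) : continuous (@Pk R k).
Proof.
have -> : @Pk R k = (fun t => k%:R * (pi^-1 * (1 + (k%:R * t) * (k%:R * t))^-1)).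
  by apply/funext => t; rewrite /Pk /Pker expr2.
move=> t.
apply: (continuousM (s := fun _ : R => k%:R) (t := fun t => pi^-1 * (1 + (k%:R * t) * (k%:R * t))^-1)).
  exact: cst_continuous.
apply: (continuousM (s := fun _ : R => pi^-1) (t := fun t => (1 + (k%:R * t) * (k%:R * t))^-1)).
  exact: cst_continuous.
apply: continuousV.
  have := sqr_ge0 (k%:R * t); rewrite expr2 => h.
  by rewrite gt_eqF // ltr_pwDl.
apply: continuousD; first exact: cst_continuous.
have ck : {for t, continuous (fun t : R => k%:R * t)}.
  apply: (continuousM (s := fun _ : R => k%:R) (t := id)); [exact: cst_continuous | exact: cvg_id].
exact: (continuousM (s := fun t : R => k%:R * t) (t := fun t : R => k%:R * t)).
Qed.

Lemma key2 {R : realType} (Phi : R * R -> R) (Kir : nat -> R -> R) (k : nat)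
  (x M eps d : R) :
  (0 < k)%N -> k%:R^-1 < d ->
  (forall t y, `|t - x| < d -> `|y - x| < d -> `|Phi (t, y) - M| <= eps) ->
  continuous (Kir k) ->
  (forall phi : R -> R, continuous phi -> has_compact_support phi ->
     (\int[@lebesgue_measure R]_x (phi x * Kir k x * Pk k x)%:E)%E =
     int_Pi k (fun z => phi z.1 * Phi z)) ->
  `|Kir k x * Pk k x - M * (2 / k%:R)| <= eps * (2 / k%:R).
Proof.
move=> k0 kd HPhi cK Hk.
have kp : 0 < k%:R :> R by rewrite ltr0n.
have kip : 0 < k%:R^-1 :> R by rewrite invr_gt0.
have cG : {for x, continuous (fun t => Kir k t * Pk k t)}.
  apply: (continuousM (s := Kir k) (t := Pk k)); [exact: cK | exact: Pk_cont].
have bounds : forall eta, 0 < eta ->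
    Kir k x * Pk k x - eta <= (M + eps) * (2 / k%:R) /\
    (M - eps) * (2 / k%:R) <= Kir k x * Pk k x + eta.
  move=> eta eta0.
  move/cvgrPdist_lt : cG => /(_ eta eta0) /nbhs_ballP [r r0 Hr].
  pose r' := Num.min r (d - k%:R^-1).
  have r'0 : 0 < r' by rewrite lt_min r0 subr_gt0 kd.
  apply: (@key R Phi Kir k x M eps d r' eta) => //.
  - have : r' <= d - k%:R^-1 by rewrite ge_min lexx orbT.
    lra.
  - move=> t ht; apply: ltW; rewrite distrC.
    apply: Hr; rewrite -ball_normE /ball_ /= distrC.
    by apply: (lt_le_trans ht); rewrite ge_min lexx.
  - by apply: Hk; [exact: tent_cont | exact: tent_cs].
have b1 : Kir k x * Pk k x <= (M + eps) * (2 / k%:R).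
  by apply/ler_addgt0Pr => e e0; have [h _] := bounds e e0; lra.
have b2 : (M - eps) * (2 / k%:R) <= Kir k x * Pk k x.
  by apply/ler_addgt0Pr => e e0; have [_ h] := bounds e e0; lra.
rewrite ler_norml; apply/andP; split; lra.
Qed.
Lemma final_arith {R : realType} (p M x e eps kr G K : R) :
  0 < p -> 0 < e -> 1 <= kr -> eps = e / (4 * p * (1 + x ^+ 2)) ->
  4 * p * `|M| / e < kr ->
  `|G - M * (2 / kr)| <= eps * (2 / kr) ->
  K * (kr * (p^-1 * (1 + (kr * x) ^+ 2)^-1)) = G ->
  `|2 * p * x ^+ 2 * M - K| <= e.
Proof.
move=> p0 e0 k1 heps hk hD hK.
have kr0 : 0 < kr by lra.
have [u defu] : {u | u = kr^-1} by exists kr^-1.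
have u0 : 0 < u by rewrite defu invr_gt0.
have hu : kr * u = 1 by rewrite defu mulfV // gt_eqF.
have u1 : u <= 1 by rewrite defu invr_le1 // ?unitf_gt0.
have [A defA] : {A | A = 1 + (kr * x) ^+ 2} by exists (1 + (kr * x) ^+ 2).
have A0 : 0 < A by rewrite defA ltr_pwDl // sqr_ge0.
have hA : A * u * u = u * u + x ^+ 2.
  rewrite defA defu; field; rewrite gt_eqF //.
have [D defD] : {D | D = G - M * (2 / kr)} by exists (G - M * (2 / kr)).
rewrite -defD in hD.
have hG : G = M * (2 * u) + D by rewrite defD defu; ring.
have hK' : K = G * (p * A * u).
  rewrite -hK defA defu; field; rewrite ?gt_eqF // -defA //.
have eK : 2 * p * x ^+ 2 * M - K = - (2 * p * M * (u * u)) - D * (p * A * u).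
  have -> : K = 2 * p * M * (A * u * u) + D * (p * A * u) by rewrite hK' hG; ring.
  rewrite hA; ring.
rewrite eK.
have n1 : `|2 * p * M * (u * u)| <= e / 2.
  rewrite !normrM (ger0_norm (ltW p0)) (ger0_norm (ltW u0)) (@ger0_norm _ 2) //.
  have hM : 4 * p * `|M| < e * kr by rewrite -ltr_pdivrMl // mulrC.
  have : 4 * p * `|M| * u <= e * kr * u by rewrite ler_wpM2r // ?ltW.
  rewrite -[e * kr * u]mulrA hu mulr1 => h.
  have : `|M| * (u * u) <= `|M| * u by rewrite ler_wpM2l // ler_piMr // ltW.
  nra.
have n2 : `|D * (p * A * u)| <= e / 2.
  rewrite normrM (ger0_norm (mulr_ge0 (mulr_ge0 (ltW p0) (ltW A0)) (ltW u0))).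
  have h1 : `|D| * (p * A * u) <= eps * (2 / kr) * (p * A * u).
    by rewrite ler_wpM2r // !mulr_ge0 // ltW.
  apply: (le_trans h1).
  have -> : eps * (2 / kr) * (p * A * u) = 2 * p * eps * (A * u * u) by rewrite defu; ring.
  rewrite hA heps.
  have x0 : 0 <= x ^+ 2 by rewrite sqr_ge0.
  have : u * u <= 1 by rewrite -[1]mul1r ler_pM // ltW.
  move=> uu.
  have -> : 2 * p * (e / (4 * p * (1 + x ^+ 2))) * (u * u + x ^+ 2) =
            e / 2 * ((u * u + x ^+ 2) / (1 + x ^+ 2)).
    field; rewrite ?gt_eqF //; lra.
  rewrite -[X in _ <= X]mulr1 ler_wpM2l //; first lra.
  by rewrite ler_pdivrMr ?mul1r; lra.
apply: (le_trans (ler_normB _ _)).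
rewrite normrN; lra.
Qed.

Theorem proposition10p1 (R : realType) (Phi : R * R -> R)
  (Kir : nat -> R -> R) :
  continuous Phi -> has_compact_support Phi ->
  (forall k, (0 < k)%N -> continuous (Kir k)) ->
  (forall k, (0 < k)%N -> forall phi : R -> R,
     continuous phi -> has_compact_support phi ->
     (\int[@lebesgue_measure R]_x (phi x * Kir k x * Pk k x)%:E)%E =
     int_Pi k (fun z => phi z.1 * Phi z)) ->
  forall x : R, (fun k => Kir k x) @ \oo --> 2 * pi * x ^+ 2 * Phi (x, x).
Proof.
move=> cPhi _ cK Hk x.
set M := Phi (x, x).
apply/cvgrPdist_le => e e0.
have pi0 : 0 < pi :> R := pi_gt0 R.
have x2 : 0 <= x ^+ 2 by rewrite sqr_ge0.
pose eps := e / (4 * pi * (1 + x ^+ 2)).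
have eps0 : 0 < eps by rewrite divr_gt0 // !mulr_gt0 // ltr_pwDl.
have := cPhi (x, x); move/cvgrPdist_lt => /(_ eps eps0) /nbhs_ballP [d d0 Hd].
have HPhi : forall t y, `|t - x| < d -> `|y - x| < d -> `|Phi (t, y) - M| <= eps.
  move=> t y ht hy; apply: ltW; rewrite distrC; apply: Hd; split;
    by rewrite -ball_normE /ball_ /= distrC.
near=> k.
have k0 : (0 < k)%N by near: k; exact: nbhs_infty_gt.
have k1 : 1 <= k%:R :> R by rewrite ler1n.
have kd : k%:R^-1 < d.
  have : d^-1 < k%:R by near: k; exact: nbhs_infty_gtr.
  by rewrite invf_plt // posrE ltr0n.
have hk : 4 * pi * `|M| / e < k%:R by near: k; exact: nbhs_infty_gtr.
apply: (@final_arith R pi M x e eps k%:R (Kir k x * Pk k x)) => //.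
- exact: (@key2 R Phi Kir k x M eps d k0 kd HPhi (cK k k0) (Hk k k0)).
Unshelve. all: by end_near.
Qed.
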